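(* Fix $0<\alpha<2\le\kappa$. Let $X_1$ be the number of potential offspring of a given parent pair in a generation where, with probability $\varepsilon_N\in(0,1)$, $X_1\vartriangleright\mathbb L(\alpha,\zeta(N))$ and otherwise $X_1\vartriangleright\mathbb L(\kappa,\zeta(N))$. Suppose that, as $N\to\infty$, $\varepsilon_N=O(\zeta(N)^{\alpha-1})$ when $0<\alpha<1$, $\varepsilon_N=O(1/\log\zeta(N))$ when $\alpha=1$, and $\varepsilon_N=O(1)$ when $\alpha>1$. Then $\limsup_{N\to\infty}\mathbb E[X_1]<\infty$.
   Context: For $a>0$ and a positive integer-valued deterministic function $\zeta(N)$, $X\vartriangleright\mathbb L(a,\zeta(N))$ means: $\mathbb P(X\le\zeta(N))=1$, the mass outside $\{2,\dots,\zeta(N)\}$ lies on $\{0,1\}$, and for $k\in\{2,\dots,\zeta(N)\}$, $g_a(k)(k^{-a}-(1+k)^{-a})\le\mathbb P(X=k)\le f_a(k)(k^{-a}-(1+k)^{-a})$, where $g_a\le f_a$ are bounded positive functions on $\mathbb N$ with $\inf_k\sup_{i\ge k}f_a(i)<\infty$ and $\sup_k\inf_{i\ge k}g_a(i)>0$, and it is assumed that $\mathbb E[X]>2$. *)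

(* Defs.v *)
From HB Require Import structures.
From mathcomp Require Import all_boot all_order all_algebra.
From mathcomp Require Import all_classical all_reals all_analysis.
Set Implicit Arguments. Unset Strict Implicit. Unset Printing Implicit Defensive.
Import Order.TTheory GRing.Theory Num.Theory.
Import numFieldNormedType.Exports.
Local Open Scope ring_scope.

Definition mean_upto {R : realType} (z : nat) (p : nat -> R) : R :=
  \sum_(k < z.+1) (k%:R * p k).

(* Admissible envelope functions (g_a <= f_a) of the class L(a, .):
   bounded positive functions with inf_k sup_{i>=k} f(i) < oo
   and sup_k inf_{i>=k} g(i) > 0 (written out via eventual bounds). *)
Definition admissible_envelopes {R : realType} (f g : nat -> R) : Prop :=
  [/\ (forall k, 0 < g k), (forall k, g k <= f k),
      (exists M : R, forall k, f k <= M /\ g k <= M),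
      (exists M : R, exists k0, forall i, (k0 <= i)%N -> f i <= M) &
      (exists c : R, 0 < c /\ exists k0, forall i, (k0 <= i)%N -> c <= g i)].

(* X |> L(a, z) with envelopes f_a = f, g_a = g, expressed on the law
   p : nat -> R of X (p k = P(X = k)). *)
Definition in_L {R : realType} (a : R) (f g : nat -> R) (z : nat) (p : nat -> R)
  : Prop :=
  [/\ (forall k, 0 <= p k),
      (forall k, (z < k)%N -> p k = 0),
      \sum_(k < z.+1) p k = 1,
      (forall k : nat, (2 <= k <= z)%N ->
         g k * (k%:R `^ (- a) - (1 + k%:R) `^ (- a)) <= p k /\
         p k <= f k * (k%:R `^ (- a) - (1 + k%:R) `^ (- a))) &
      2 < mean_upto z p].

(* Main.v *)
Require Import Defs.
From HB Require Import structures.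
From mathcomp Require Import all_boot all_order all_algebra.
From mathcomp Require Import all_classical all_reals all_analysis.
From mathcomp Require Import ring lra.
Import Order.TTheory GRing.Theory Num.Theory.
Import numFieldNormedType.Exports.
Local Open Scope ring_scope.

Section Aux.
Variable R : realType.
Implicit Types x y t a b : R.

Lemma powRE x t : 0 < x -> x `^ t = expR (t * ln x).
Proof. by move=> x0; rewrite /powR gt_eqF. Qed.

Lemma L1 x y t : 0 < x -> 0 < y ->
  x `^ t * (1 + t * (ln y - ln x)) <= y `^ t.
Proof.
move=> x0 y0; rewrite !powRE //.
have -> : t * ln y = t * ln x + t * (ln y - ln x) by ring.
rewrite expRD ler_wpM2l ?expR_ge0 //; exact: expR_ge1Dx.
Qed.

Lemma lnS_le x : 0 < x -> ln (x + 1) - ln x <= x^-1.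
Proof.
move=> x0.
have -> : x + 1 = x * (1 + x^-1) by field; rewrite gt_eqF.
rewrite lnM ?posrE ?addr_gt0 ?invr_gt0 // addrAC subrr add0r.
apply: le_ln1Dx; rewrite (@lt_le_trans _ _ 0) ?ltrN10 // invr_ge0 ltW //.
Qed.

Lemma lnP_ge x : 1 < x -> x^-1 <= ln x - ln (x - 1).
Proof.
move=> x1; have x0 : 0 < x by lra.
have -> : x - 1 = x * (1 + - x^-1) by field; rewrite gt_eqF.
have h : -1 < - x^-1.
  rewrite ltrN2 invf_lt1 //.
rewrite lnM ?posrE // ?subr_gt0 ?invf_lt1 //.
rewrite opprD addrA subrr add0r lerNr; exact: le_ln1Dx.
Qed.


Lemma bndA a x : 0 <= a -> 0 < x -> x `^ (- a) - (x + 1) `^ (- a) <= a * x `^ (- a) / x.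
Proof.
move=> a0 x0.
have xp : 0 < x + 1 by lra.
have h := @L1 x (x + 1) (- a) x0 xp.
have hl := @lnS_le x x0.
have p0 := powR_ge0 x (- a).
have : a * (ln (x + 1) - ln x) <= a * x^-1 by rewrite ler_wpM2l.
set L := ln (x + 1) - ln x in h hl *.
set P := x `^ (- a) in h p0 *.
move=> haL.
have : P * (a * L) <= P * (a * x^-1) by rewrite ler_wpM2l.
move: h; rewrite mulNr.
nra.
Qed.

Lemma bndB a x : 1 < a -> 1 < x ->
  x `^ (- a) <= ((x - 1) `^ (1 - a) - x `^ (1 - a)) / (a - 1).
Proof.
move=> a1 x1; have x0 : 0 < x by lra.
have xm : 0 < x - 1 by lra.
have h' := @L1 x (x - 1) (1 - a) x0 xm.
have hl := @lnP_ge x x1.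
have eqe : x `^ (- a) = x `^ (1 - a) * x^-1.
  rewrite -powR_inv1 ?(ltW x0) // -powRD ?(gt_eqF x0) ?implybT //.
  by have -> : 1 - a + -1 = - a by ring.
rewrite eqe ler_pdivlMr ?subr_gt0 //.
have p0 := powR_ge0 x (1 - a).
set P := x `^ (1 - a) in h' p0 eqe *.
set L := ln x - ln (x - 1) in hl.
have : (a - 1) * x^-1 <= (a - 1) * L by rewrite ler_wpM2l // subr_ge0 ltW.
move=> hh.
have : P * ((a - 1) * x^-1) <= P * ((a - 1) * L) by rewrite ler_wpM2l.
move: h'; have -> : ln (x - 1) - ln x = - L by rewrite /L; ring.
nra.
Qed.

Lemma bndC x : 1 < x -> x `^ (- 1) <= ln x - ln (x - 1).
Proof. by move=> x1; rewrite powR_inv1 ?lnP_ge //; lra. Qed.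

Lemma bndD a x : 0 <= a < 1 -> 2 <= x ->
  x `^ (- a) <= 2 / (1 - a) * (x `^ (1 - a) - (x - 1) `^ (1 - a)).
Proof.
move=> /andP[a0 a1] x2; have x1 : 1 < x by lra. have x0 : 0 < x by lra.
have xm0 : 0 < x - 1 by lra.
have h' := @L1 (x - 1) x (1 - a) xm0 x0.
have hl := @lnP_ge x x1.
have eqe : x `^ (- a) = x `^ (1 - a) * x^-1.
  rewrite -powR_inv1 ?(ltW x0) // -powRD ?(gt_eqF x0) ?implybT //.
  by have -> : 1 - a + -1 = - a by ring.
have half : x `^ (1 - a) <= 2 * (x - 1) `^ (1 - a).
  have h1 : (x / 2) `^ (1 - a) <= (x - 1) `^ (1 - a).
    apply: ge0_ler_powR; rewrite ?nnegrE; lra.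
  have h2 : 2^-1 <= 2^-1 `^ (1 - a).
    by apply: ger1_powR; [rewrite invr_gt0 ltr0Sn invf_le1 ?ler1n|lra].
  have e2 : (x / 2) `^ (1 - a) = x `^ (1 - a) * 2^-1 `^ (1 - a).
    by apply: powRM; [lra | rewrite invr_ge0 ler0n].
  rewrite e2 in h1.
  have p0 := powR_ge0 x (1 - a).
  have : x `^ (1 - a) * 2^-1 <= x `^ (1 - a) * 2^-1 `^ (1 - a) by rewrite ler_wpM2l.
  lra.
rewrite eqe.
have p0 := powR_ge0 (x - 1) (1 - a).
set P := (x - 1) `^ (1 - a) in h' half p0 *.
set Q := x `^ (1 - a) in half h' *.
set L := ln x - ln (x - 1) in hl h'.
have xi0 : 0 < x^-1 by rewrite invr_gt0.
have : P * ((1 - a) * x^-1) <= P * ((1 - a) * L) by rewrite ler_wpM2l // ler_wpM2l // subr_ge0 ltW.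
move=> hh.
have ha : 0 < 1 - a by lra.
have s1 : Q * x^-1 <= 2 * P * x^-1 by rewrite ler_wpM2r // ltW.
have s2 : (1 - a) * (P * x^-1) <= Q - P.
  have : P * ((1 - a) * L) <= Q - P by move: h'; rewrite mulrDr mulr1; lra.
  move: hh; lra.
rewrite mulrAC ler_pdivlMr //.
have : (1 - a) * (Q * x^-1) <= (1 - a) * (2 * P * x^-1) by rewrite ler_wpM2l // ltW.
lra.
Qed.


Definition S a n := \sum_(k < n.+1) (if (2 <= k)%N then k%:R `^ (- a) else 0).

Lemma S_ge0 a n : 0 <= S a n.
Proof. by apply: sumr_ge0 => k _; case: ifP => // _; exact: powR_ge0. Qed.

Lemma tele a (G : nat -> R) :
  (forall n, (1 <= n)%N -> (n.+1)%:R `^ (- a) <= G n.+1 - G n) ->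
  forall n, (1 <= n)%N -> S a n <= G n - G 1%N.
Proof.
move=> hG; elim=> [//|n IH] _.
rewrite /S big_ord_recr /=.
case: n IH => [_|n IH].
  by rewrite big_ord_recr big_ord0 /= subrr !(add0r, addr0).
rewrite -/(S a n.+1) (_ : (1 < n.+2)%N = true) //.
have := IH isT; have := hG n.+1 isT; lra.
Qed.

Lemma natS1 n : (n.+1)%:R - 1 = n%:R :> R.
Proof. by rewrite -addn1 natrD addrK. Qed.

Lemma S_gt1 a n : 1 < a -> S a n <= (a - 1)^-1.
Proof.
move=> a1; case: n => [|n].
  by rewrite /S big_ord_recr big_ord0 /= add0r; apply: ltW; rewrite invr_gt0 subr_gt0.
pose G m := - ((m%:R `^ (1 - a)) / (a - 1)).
have hG : forall m : nat, (1 <= m)%N -> (m.+1)%:R `^ (- a) <= G m.+1 - G m.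
  move=> m m1.
  have h1 : 1 < (m.+1)%:R :> R by rewrite ltr1n ltnS.
  have := @bndB a (m.+1)%:R a1 h1; rewrite natS1 /G.
  have e : forall u v : R, u / (a - 1) - v / (a - 1) = (u - v) / (a - 1) by move=> u v; rewrite mulrBl.
  by rewrite -e opprK addrC.
have := @tele a G hG n.+1 isT.
rewrite /G powR1 mul1r => h.
apply: le_trans h _.
have : 0 <= (n.+1%:R `^ (1 - a)) / (a - 1).
  by rewrite divr_ge0 ?powR_ge0 // subr_ge0 ltW.
lra.
Qed.



Lemma S_1 n : (1 <= n)%N -> S 1 n <= ln n%:R.
Proof.
move=> n1.
have hG : forall m : nat, (1 <= m)%N -> ((m.+1)%:R : R) `^ (- 1) <= ln ((m.+1)%:R : R) - ln (m%:R : R).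
  move=> m m1.
  have h1 : 1 < (m.+1)%:R :> R by rewrite ltr1n ltnS.
  by have := @bndC (m.+1)%:R h1; rewrite natS1.
have := @tele 1 (fun m => ln (m%:R : R)) hG n n1.
by rewrite ln1 subr0.
Qed.

Lemma S_lt1 a n : 0 < a < 1 -> S a n <= 2 / (1 - a) * n%:R `^ (1 - a).
Proof.
move=> /andP[a0 a1].
have c0 : 0 <= 2 / (1 - a) by rewrite divr_ge0 // subr_ge0 ltW.
case: n => [|n].
  rewrite /S big_ord_recr big_ord0 /= add0r.
  by rewrite mulr_ge0 ?powR_ge0.
pose G m := 2 / (1 - a) * m%:R `^ (1 - a).
have hG : forall m : nat, (1 <= m)%N -> (m.+1)%:R `^ (- a) <= G m.+1 - G m.
  move=> m m1.
  have h1 : 2 <= (m.+1)%:R :> R by rewrite ler_nat ltnS.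
  have a01 : 0 <= a < 1 by rewrite a1 ltW.
  by have := @bndD a (m.+1)%:R a01 h1; rewrite natS1 /G mulrBr.
have := @tele a G hG n.+1 isT.
have : 0 <= G 1%N by rewrite /G mulr_ge0 ?powR_ge0.
rewrite /G; lra.
Qed.


Lemma Dge0 a x : 0 <= a -> 0 < x -> 0 <= x `^ (- a) - (x + 1) `^ (- a).
Proof.
move=> a0 x0; have x1 : 0 < x + 1 by lra.
rewrite subr_ge0 !powRE // ler_expR.
have : ln x <= ln (x + 1) by rewrite ler_ln ?posrE //; lra.
nra.
Qed.

Lemma mean_bnd a (f g : nat -> R) z p M : 0 < a -> in_L a f g z p ->
  (forall k, f k <= M) -> 0 <= M -> mean_upto z p <= 1 + M * a * S a z.
Proof.
move=> a0 [p0 pz ps pb _] fM M0.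
rewrite /mean_upto /S.
apply: (@le_trans _ _ (\sum_(k < z.+1) (p k + M * a * (if (2 <= k)%N then k%:R `^ (- a) else 0)))); last first.
  by rewrite big_split /= ps mulr_sumr.
apply: ler_sum => k _.
case: ifP => hk.
- have kz : (2 <= k <= z)%N by rewrite hk -ltnS ltn_ord.
  have [_ hi] := pb k kz.
  have k0 : 0 < k%:R :> R by rewrite ltr0n; case: (nat_of_ord k) hk.
  have D0 := @Dge0 a k%:R (ltW a0) k0.
  have hA := @bndA a k%:R (ltW a0) k0.
  rewrite [k%:R + 1]addrC in hA D0.
  set D := k%:R `^ (- a) - (1 + k%:R) `^ (- a) in hi D0 hA.
  have h2 : p k <= M * D by apply: le_trans hi _; rewrite ler_wpM2r.
  have h3 : k%:R * p k <= k%:R * (M * D) by rewrite ler_wpM2l // ltW.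
  have h4 : k%:R * D <= a * k%:R `^ (- a).
    have := ler_wpM2l (ltW k0) hA.
    by rewrite [a * _ / _]mulrC mulrA mulrV ?unitfE ?gt_eqF // mul1r.
  have h5 : M * (k%:R * D) <= M * (a * k%:R `^ (- a)) by rewrite ler_wpM2l.
  have := p0 k.
  move: h3 h5; rewrite !mulrA [k%:R * M]mulrC; lra.
- have k1 : k%:R <= 1 :> R.
    by rewrite lern1; case: (nat_of_ord k) hk => [|[|]].
  have := ler_wpM2r (p0 k) k1; rewrite mul1r mulr0 addr0 //.
Qed.

Lemma mean_mix z (e : R) (p1 p2 : nat -> R) :
  mean_upto z (fun k => e * p1 k + (1 - e) * p2 k) =
  e * mean_upto z p1 + (1 - e) * mean_upto z p2.
Proof.
rewrite /mean_upto !mulr_sumr -big_split /=; apply: eq_bigr => k _; ring.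
Qed.

Lemma mean_ge0 a (f g : nat -> R) z p : in_L a f g z p -> 0 <= mean_upto z p.
Proof. by case=> _ _ _ _ h; lra. Qed.

End Aux.
Arguments S {R}.
Arguments mean_bnd {R}.
Arguments mean_ge0 {R}.
Arguments S_gt1 {R}.
Arguments S_1 {R}.
Arguments S_lt1 {R}.
Arguments S_ge0 {R}.

Local Open Scope classical_set_scope.

Theorem lemma5 (R : realType) (alpha kappa : R)
  (fa ga fk gk : nat -> R) (zeta : nat -> nat) (eps : nat -> R)
  (q r : nat -> nat -> R) :
  0 < alpha -> alpha < 2 -> 2 <= kappa ->
  admissible_envelopes fa ga -> admissible_envelopes fk gk ->
  (forall N, (0 < zeta N)%N) ->
  (forall N, 0 < eps N < 1) ->
  (forall N, in_L alpha fa ga (zeta N) (q N)) ->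
  (forall N, in_L kappa fk gk (zeta N) (r N)) ->
  (alpha < 1 -> eps =O_\oo (fun N => (zeta N)%:R `^ (alpha - 1))) ->
  (alpha = 1 -> eps =O_\oo (fun N => (ln ((zeta N)%:R))^-1)) ->
  (1 < alpha -> eps =O_\oo (fun N => (1 : R))) ->
  (limn_esup (fun N => (mean_upto (zeta N)
       (fun k => eps N * q N k + (1 - eps N) * r N k))%:E) < +oo)%E.

Proof.
move=> a0 a2 k2 [ga0 gfa [Ma hMa] _ _] [gk0 gfk [Mk hMk] _ _] z0 epsb hq hr Olt O1 Ogt.
have Mk0 : 0 <= Mk by have := gk0 0%N; have := gfk 0%N; have := hMk 0%N; lra.
have Ma0 : 0 <= Ma by have := ga0 0%N; have := gfa 0%N; have := hMa 0%N; lra.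
have key : exists C : R, \forall N \near \oo, eps N * S alpha (zeta N) <= C.
  case: (ltgtP alpha 1) => ha.
  - have := Olt ha; move/eqO_exP => [k k0 hk].
    exists (k * (2 / (1 - alpha))); move: hk; apply: filterS => N hN.
    have [e0 e1] := andP (epsb N).
    have zp : 0 < (zeta N)%:R :> R by rewrite ltr0n.
    rewrite ger0_norm ?(ltW e0) // ger0_norm ?powR_ge0 // in hN.
    have hS := S_lt1 alpha (zeta N) (_ : 0 < alpha < 1).
    rewrite a0 ha in hS; have {}hS := hS isT.
    have S0 := S_ge0 alpha (zeta N).
    have c0 : 0 <= 2 / (1 - alpha) by rewrite divr_ge0 // subr_ge0 ltW.
    have hp : (zeta N)%:R `^ (alpha - 1) * (zeta N)%:R `^ (1 - alpha) = 1 :> R.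
      rewrite -powRD ?(gt_eqF zp) ?implybT //.
      by rewrite (_ : alpha - 1 + (1 - alpha) = 0) ?powRr0 //; ring.
    set P1 := (zeta N)%:R `^ (alpha - 1) in hN hp.
    set P2 := (zeta N)%:R `^ (1 - alpha) in hS hp.
    have s1 : eps N * S alpha (zeta N) <= k * P1 * S alpha (zeta N) by rewrite ler_wpM2r.
    have s2 : k * P1 * S alpha (zeta N) <= k * P1 * (2 / (1 - alpha) * P2).
      by rewrite ler_wpM2l // mulr_ge0 ?powR_ge0 // ltW.
    have s3 : k * P1 * (2 / (1 - alpha) * P2) = k * (2 / (1 - alpha)) * (P1 * P2) by ring.
    rewrite hp mulr1 in s3; lra.
  - exists (alpha - 1)^-1; apply: nearW => N.
    have [e0 e1] := andP (epsb N).
    have S0 := S_ge0 alpha (zeta N).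
    have := S_gt1 alpha (zeta N) ha.
    have : eps N * S alpha (zeta N) <= 1 * S alpha (zeta N) by rewrite ler_wpM2r // ltW.
    lra.
  - have := O1 ha; move/eqO_exP => [k k0 hk].
    exists k; move: hk; apply: filterS => N hN.
    have [e0 e1] := andP (epsb N).
    have z1 : 1 <= (zeta N)%:R :> R by rewrite ler1n.
    have l0 : 0 <= ln ((zeta N)%:R : R) by apply: ln_ge0.
    rewrite ger0_norm ?(ltW e0) // ger0_norm ?invr_ge0 // in hN.
    rewrite ha.
    have hS := @S_1 R (zeta N) (z0 N).
    have S0 := @S_ge0 R 1 (zeta N).
    have s1 : eps N * S 1 (zeta N) <= k * (ln ((zeta N)%:R : R))^-1 * S 1 (zeta N) by rewrite ler_wpM2r.
    have s2 : k * (ln ((zeta N)%:R : R))^-1 * S 1 (zeta N) <= k * (ln ((zeta N)%:R : R))^-1 * ln (zeta N)%:R.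
      by rewrite ler_wpM2l // mulr_ge0 ?invr_ge0 // ltW.
    have s3 : k * (ln ((zeta N)%:R : R))^-1 * ln (zeta N)%:R <= k.
      have [->|ne] := eqVneq (ln ((zeta N)%:R : R)) 0.
        by rewrite mulr0 ltW.
      by rewrite -mulrA mulVf // mulr1.
    lra.
case: key => C hC.
pose B := 1 + Ma * alpha * C + (1 + Mk * kappa * (kappa - 1)^-1).
have hB : \forall N \near \oo, mean_upto (zeta N)
       (fun k => eps N * q N k + (1 - eps N) * r N k) <= B.
  move: hC; apply: filterS => N hN.
  rewrite mean_mix.
  have [e0 e1] := andP (epsb N).
  have hEq := mean_bnd _ _ _ _ _ _ a0 (hq N) (fun k => proj1 (hMa k)) Ma0.
  have kp : 0 < kappa by lra.
  have hEr := mean_bnd _ _ _ _ _ _ kp (hr N) (fun k => proj1 (hMk k)) Mk0.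
  have k1 : 1 < kappa by lra.
  have hSk := @S_gt1 R kappa (zeta N) k1.
  have Er0 := mean_ge0 _ _ _ _ _ (hr N).
  set Eq := mean_upto (zeta N) (q N) in hEq *.
  set Er := mean_upto (zeta N) (r N) in hEr Er0 *.
  set Sa := S alpha (zeta N) in hN hEq *.
  set Sk := S kappa (zeta N) in hEr hSk.
  have h1 : eps N * Eq <= eps N * (1 + Ma * alpha * Sa) by rewrite ler_wpM2l // ltW.
  have h2 : eps N * (1 + Ma * alpha * Sa) = eps N + Ma * alpha * (eps N * Sa) by ring.
  have h3 : Ma * alpha * (eps N * Sa) <= Ma * alpha * C by rewrite ler_wpM2l // mulr_ge0 // ltW.
  have h4 : (1 - eps N) * Er <= Er by apply: ler_piMl => //; lra.
  have h5 : Mk * kappa * Sk <= Mk * kappa * (kappa - 1)^-1 by rewrite ler_wpM2l // mulr_ge0 //; lra.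
  rewrite /B; lra.
have [n0 _ hn0] := hB.
rewrite limn_esup_lim.
apply: (@le_lt_trans _ _ B%:E); last exact: ltry.
apply: lime_le; first exact: is_cvg_esups.
exists n0 => // n /= hn.
apply: ge_ereal_sup => _ [k /= hk <-]; rewrite lee_fin.
by apply: hn0; exact: leq_trans hn hk.
Qed.
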